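(* For every $Q\in\mathcal{P}$ and every $0<v<2$, $$D^*(v,Q)=\inf\left\{\mathrm{KL}_2\!\left(Q(A)+\tfrac v2,\,Q(A)\right):\ A\in\mathcal{F},\ 0<Q(A)\le 1-\tfrac v2\right\}.$$
   Context: Let $(\Omega,\mathcal{F},\mu)$ be a finite or $\sigma$-finite measure space, and let $\mathcal{P}$ be the set of probability measures on $(\Omega,\mathcal{F})$ absolutely continuous with respect to $\mu$. For $P,Q\in\mathcal{P}$ the lower-case letters $p,q$ denote their densities with respect to $\mu$. The Kullback–Leibler divergence is $D(P\Vert Q)=\int\ln\frac{dP}{dQ}\,dP$ if $P\ll Q$, and $+\infty$ otherwise. The total variation distance is $V(P,Q)=\int_\Omega|p-q|\,d\mu$. For $v>0$ define $D^*(v,Q)=\inf\{D(P\Vert Q):P\in\mathcal{P},\ V(P,Q)\ge v\}$. All infima over empty sets equal $+\infty$. For $p,q\in[0,1]$, $\mathrm{KL}_2(p,q)=p\ln\frac pq+(1-p)\ln\frac{1-p}{1-q}$, with the conventions $0\ln(0/x)=0$ and $a\ln(a/0)=+\infty$ for $a>0$. *)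

(* Defs.v *)
From HB Require Import structures.
From mathcomp Require Import all_boot all_order all_algebra.
From mathcomp Require Import all_classical all_reals all_analysis.
Set Implicit Arguments. Unset Strict Implicit. Unset Printing Implicit Defensive.
Import Order.TTheory GRing.Theory Num.Theory.
Local Open Scope classical_set_scope.
Local Open Scope ring_scope.

Section Defs.
Context {d : measure_display} {T : measurableType d} {R : realType}.
Variable mu : {measure set T -> \bar R}.

(* p is the density (w.r.t. mu) of a probability measure P << mu *)
Definition is_density (p : T -> R) : Prop :=
  [/\ measurable_fun setT p, (forall x, 0 <= p x) &
      (\int[mu]_x (p x)%:E = 1)%E].

Definition Pr (p : T -> R) (A : set T) : \bar R := (\int[mu]_(x in A) (p x)%:E)%E.

Definition abs_cont (p q : T -> R) : Prop :=
  forall A, measurable A -> Pr q A = 0%E -> Pr p A = 0%E.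

(* D(P||Q) = \int ln(dP/dQ) dP = \int_{p>0} p ln(p/q) dmu if P << Q, +oo otherwise *)
Definition KLdiv (p q : T -> R) : \bar R :=
  if `[< abs_cont p q >] then
    (\int[mu]_(x in [set x | (0 < p x)%R]) (p x * ln (p x / q x))%:E)%E
  else +oo%E.

Definition TV (p q : T -> R) : \bar R := (\int[mu]_x (`|p x - q x|)%:E)%E.

Definition Dstar (v : R) (q : T -> R) : \bar R :=
  ereal_inf [set KLdiv p q | p in [set p | is_density p /\ (v%:E <= TV p q)%E]].

End Defs.

Definition xlogxy {R : realType} (a b : R) : \bar R :=
  if a == 0 then 0%E else if b == 0 then +oo%E else (a * ln (a / b))%:E.

Definition KL2 {R : realType} (p q : R) : \bar R :=
  (xlogxy p q + xlogxy (1 - p) (1 - q))%E.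

(* Main.v *)
Require Import Defs.
From HB Require Import structures.
From mathcomp Require Import all_boot all_order all_algebra.
From mathcomp Require Import all_classical all_reals all_analysis.
From mathcomp Require Import measurable_realfun.
From mathcomp Require Import ring lra.
Import Order.TTheory GRing.Theory Num.Theory.
Local Open Scope classical_set_scope.
Local Open Scope ring_scope.
Lemma measurable_invR (R : realType) : measurable_fun [set: R] (@GRing.inv R).
Proof.
rewrite -(setUv [set 0%R]); apply/measurable_funU => //.
  exact: measurableC.
split; first exact: measurable_fun_set1.
apply: open_continuous_measurable_fun.
  by apply: closed_openC; apply: compact_closed; [exact: Rhausdorff|exact: compact_set1].
move=> x; rewrite inE /= => x0; apply: inv_continuous; exact/eqP.
Qed.

Section S.
Set Implicit Arguments. Unset Strict Implicit.
Context (d : measure_display) (T : measurableType d) (R : realType).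

Lemma meas_le (f : T -> R) (c : R) : measurable_fun setT f -> measurable [set x | f x <= c].
Proof.
move=> mf; have := mf measurableT _ (measurable_itv `]-oo, c]).
by rewrite setTI (_ : [set x | f x <= c] = f @^-1` `]-oo, c]) //.
Qed.

Lemma meas_gt (f : T -> R) (c : R) : measurable_fun setT f -> measurable [set x | c < f x].
Proof.
move=> mf; have := mf measurableT _ (measurable_itv `]c, +oo[).
rewrite setTI; suff -> : [set x | c < f x] = f @^-1` `]c, +oo[ by [].
by apply/seteqP; split => x /=; rewrite in_itv /= andbT.
Qed.

Lemma meas_lt (f g : T -> R) : measurable_fun setT f -> measurable_fun setT g ->
  measurable [set x | f x < g x].
Proof.
move=> mf mg; have := @meas_gt (g \- f) 0 (measurable_funB mg mf).
suff -> : [set x | f x < g x] = [set x | 0 < (g \- f) x] by [].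
apply/seteqP. split. move=> x /=. rewrite subr_gt0. done. move=> x /=. rewrite subr_gt0. done.
Qed.

Variable mu : {measure set T -> \bar R}.

Lemma dens_int p D : is_density mu p -> measurable D -> mu.-integrable D (EFin \o p).
Proof.
case=> mp p0 p1 mD; apply/integrableP; split.
  by apply/measurable_EFinP; apply: measurable_funS mp.
rewrite (eq_integral (fun x => (p x)%:E)); last first.
  by move=> x _; rewrite /= ger0_norm.
apply: (le_lt_trans (ge0_subset_integral mu mD measurableT _ _ _)) => //.
- by apply/measurable_EFinP.
- by move=> x _; rewrite lee_fin.
- by rewrite p1 ltry.
Qed.

Lemma Pr_ge0 p A : is_density mu p -> (0 <= Pr mu p A)%E.
Proof. by case=> _ p0 _; apply: integral_ge0 => x _; rewrite lee_fin. Qed.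

Lemma Pr_le1 p A : is_density mu p -> measurable A -> (Pr mu p A <= 1)%E.
Proof.
case=> mp p0 p1 mA; rewrite -p1; apply: ge0_subset_integral => //.
- by apply/measurable_EFinP.
- by move=> x _; rewrite lee_fin.
Qed.

Lemma Pr_fin p A : is_density mu p -> measurable A -> Pr mu p A \is a fin_num.
Proof.
move=> hp mA; rewrite ge0_fin_numE; last exact: Pr_ge0.
by apply: (le_lt_trans (Pr_le1 hp mA)); rewrite ltry.
Qed.

Definition pr p A := fine (Pr mu p A).

Lemma PrE p A : is_density mu p -> measurable A -> Pr mu p A = (pr p A)%:E.
Proof. by move=> hp mA; rewrite /pr fineK //; exact: Pr_fin. Qed.

Lemma pr_ge0 p A : is_density mu p -> 0 <= pr p A.
Proof. by move=> hp; rewrite /pr fine_ge0 //; exact: Pr_ge0. Qed.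

Lemma pr_le1 p A : is_density mu p -> measurable A -> pr p A <= 1.
Proof. by move=> hp mA; rewrite -lee_fin -PrE //; exact: Pr_le1. Qed.

Lemma Pr_U p A B : is_density mu p -> measurable A -> measurable B ->
  A `&` B = set0 -> Pr mu p (A `|` B) = (Pr mu p A + Pr mu p B)%E.
Proof.
case=> mp _ _ mA mB AB; rewrite /Pr integral_setU //.
  by apply/measurable_EFinP; apply: measurable_funS mp.
exact/disj_set2P.
Qed.

Lemma Pr_split p A B : is_density mu p -> measurable A -> measurable B ->
  Pr mu p A = (Pr mu p (A `&` B) + Pr mu p (A `&` ~` B))%E.
Proof.
move=> hp mA mB; rewrite -Pr_U //.
- by rewrite -setIUr setUv setIT.
- exact: measurableI.
- by apply: measurableI => //; exact: measurableC.
- by rewrite setIACA setICr !setI0.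
Qed.

Lemma pr_split p A B : is_density mu p -> measurable A -> measurable B ->
  pr p A = pr p (A `&` B) + pr p (A `&` ~` B).
Proof.
move=> hp mA mB; apply/EFin_inj; rewrite EFinD -!PrE //; first exact: Pr_split.
- by apply: measurableI => //; exact: measurableC.
- exact: measurableI.
Qed.

Lemma prT p : is_density mu p -> pr p setT = 1.
Proof. by case=> ? ? p1; rewrite /pr /Pr p1. Qed.

Lemma prC p A : is_density mu p -> measurable A -> pr p (~` A) = 1 - pr p A.
Proof.
move=> hp mA; rewrite -(prT hp) (pr_split hp measurableT mA) !setTI.
by rewrite addrC addKr.
Qed.

Lemma dens_meas p : is_density mu p -> measurable_fun setT p.
Proof. by case. Qed.

Lemma dens_ge0 p x : is_density mu p -> 0 <= p x.
Proof. by case=> _ + _; apply. Qed.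

Lemma Pr_zero r s A : is_density mu s -> abs_cont mu r s -> measurable A ->
  Pr mu r (A `&` [set x | s x <= 0]) = 0%E.
Proof.
move=> hs hac mA; have mB : measurable (A `&` [set x | s x <= 0]).
  by apply: measurableI => //; apply: meas_le; exact: dens_meas.
apply: hac => //; rewrite /Pr (eq_integral (fun=> 0%E)) ?integral0 //.
move=> x; rewrite inE => -[_ /= sx]; congr EFin; apply/le_anti.
by rewrite sx dens_ge0.
Qed.

Lemma pr_pos r s A : is_density mu r -> is_density mu s -> abs_cont mu r s ->
  measurable A -> pr r A = pr r (A `&` [set x | 0 < s x]).
Proof.
move=> hr hs hac mA; rewrite (pr_split hr mA (meas_gt 0 (dens_meas hs))).
suff -> : pr r (A `&` ~` [set x | 0 < s x]) = 0 by rewrite addr0.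
rewrite /pr (_ : ~` _ = [set x | s x <= 0]) ?Pr_zero //.
by apply/seteqP; split => x /=; rewrite real_leNgt // ?num_real // => /negP.
Qed.

Lemma le_integral_m D (f g : T -> \bar R) : measurable D ->
  measurable_fun D f -> mu.-integrable D g ->
  {in D, forall x, (g x <= f x)%E} ->
  (\int[mu]_(x in D) g x <= \int[mu]_(x in D) f x)%E.
Proof.
move=> mD mf intg fg; rewrite integralE [leRHS]integralE leeB//.
- apply: ge0_le_integral => //.
  + by move/integrableP : intg => [+ _]; exact: measurable_funepos.
  + exact: measurable_funepos.
  + by move=> x /mem_set; exact: funepos_le.
- apply: ge0_le_integral => //.
  + exact: measurable_funeneg.
  + by move/integrableP : intg => [+ _]; exact: measurable_funeneg.
  + by move=> x /mem_set; exact: funeneg_le.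
Qed.

Lemma intZ_int (k : R) r D : is_density mu r -> measurable D ->
  mu.-integrable D (EFin \o (fun x => k * r x)).
Proof.
move=> hr mD; apply: (eq_integrable mD (fun x => k%:E * (EFin \o r) x)%E).
  by move=> x _; rewrite /= EFinM.
exact/(integrableZl mD)/dens_int.
Qed.

Lemma intZ (k : R) r D : is_density mu r -> measurable D ->
  (\int[mu]_(x in D) (k * r x)%:E = (k * pr r D)%:E)%E.
Proof.
move=> hr mD; rewrite (eq_integral (fun x => k%:E * (EFin \o r) x)%E); last first.
  by move=> x _; rewrite /= EFinM.
by rewrite (integralZl mD (dens_int hr mD)) EFinM -PrE.
Qed.

Lemma intlin (k1 k2 : R) r s D : is_density mu r -> is_density mu s -> measurable D ->
  (\int[mu]_(x in D) (k1 * r x - k2 * s x)%:E = (k1 * pr r D - k2 * pr s D)%:E)%E.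
Proof.
move=> hr hs mD; rewrite (eq_integral (fun x => (k1 * r x)%:E - (k2 * s x)%:E)%E); last first.
  by move=> x _; rewrite EFinB.
rewrite integralB_EFin //; last 2 first.
- exact: intZ_int.
- exact: intZ_int.
by rewrite !intZ // EFinB.
Qed.

Lemma ptw (a b c : R) : 0 <= a -> 0 < b -> 0 < c ->
  (1 + ln c) * a - c * b <= a * ln (a / b).
Proof.
move=> a0 b0 c0; have [->|ap] := eqVneq a 0.
  by rewrite mulr0 mul0r sub0r oppr_le0 mulr_ge0 // ltW.
have {ap}ap : 0 < a by rewrite lt_def ap.
have cba : 0 < c * b / a by rewrite divr_gt0 // mulr_gt0.
have hl : ln (c * b / a) <= c * b / a - 1.
  have := @le_ln1Dx R (c * b / a - 1); rewrite addrCA subrr addr0; apply.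
  by rewrite ltrBrDr addrC subrr.
have -> : ln (a / b) = ln c - ln (c * b / a).
  rewrite -ln_div; first by congr ln; field; rewrite ?gt_eqF.
  - by rewrite posrE.
  - by rewrite posrE.
have e : a * (c * b / a) = c * b by field; rewrite gt_eqF.
nra.
Qed.

Lemma intlin_int (k1 k2 : R) r s D : is_density mu r -> is_density mu s -> measurable D ->
  mu.-integrable D (EFin \o (fun x => k1 * r x - k2 * s x)).
Proof.
move=> hr hs mD.
apply: (eq_integrable mD ((EFin \o (fun x => (k1 * r x)%R)) \- (EFin \o (fun x => (k2 * s x)%R)))%E).
  by move=> x _; rewrite /= EFinB.
by apply: integrableB => //; exact: intZ_int.
Qed.

Lemma mKL p q : is_density mu p -> is_density mu q ->
  measurable_fun setT (fun x => (p x * ln (p x / q x))%:E).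
Proof.
move=> hp hq; apply/measurable_EFinP; apply: measurable_funM; first exact: dens_meas.
have mi : measurable_fun setT (fun x => (q x)^-1).
  exact: (@measurableT_comp _ _ _ _ _ _ (@GRing.inv R) setT q (@measurable_invR R) (dens_meas hq)).
have md : measurable_fun setT (fun x => p x / q x).
  exact: (measurable_funM (dens_meas hp) mi).
apply: (measurableT_comp _ md). exact: measurable_ln.
Qed.

Lemma key_bound p q B c : is_density mu p -> is_density mu q -> abs_cont mu p q ->
  measurable B -> 0 < c ->
  (((1 + ln c) * pr p B - c * pr q B)%:E <=
    \int[mu]_(x in B) (p x * ln (p x / q x))%:E)%E.
Proof.
move=> hp hq hac mB c0.
set S := [set x | 0 < q x].
have mS : measurable S by apply: meas_gt; exact: dens_meas.
have mBS : measurable (B `&` S) by exact: measurableI.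
have mBnS : measurable (B `&` ~` S) by apply: measurableI => //; exact: measurableC.
have eB : B = (B `&` S) `|` (B `&` ~` S) by rewrite -setIUr setUv setIT.
rewrite [in X in (_ <= X)%E]eB integral_setU //; first last.
- by apply/disj_set2P; rewrite setIACA setICr !setI0.
- by rewrite -eB; apply: measurable_funS (mKL hp hq).
rewrite [X in (_ <= _ + X)%E](_ : _ = 0%E); last first.
  rewrite (eq_integral (fun=> 0%E)) ?integral0 //.
  move=> x; rewrite inE => -[_ /= qx].
  have -> : q x = 0.
    by apply/le_anti; rewrite dens_ge0 // andbT leNgt; apply/negP.
  by rewrite invr0 mulr0 ln0 // mulr0.
rewrite adde0 (pr_pos hp hq hac mB) (@pr_pos q q B hq hq (fun A _ h => h) mB) -/S.
rewrite -intlin //; apply: le_integral_m => //.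
- by apply: measurable_funS (mKL hp hq).
- exact: intlin_int.
move=> x; rewrite inE => -[_ /= qx]; rewrite lee_fin.
by apply: ptw => //; exact: dens_ge0.
Qed.

Lemma int_pw q (F : T -> R) A k1 k2 : is_density mu q -> measurable A ->
  measurable_fun setT F ->
  (forall x, A x -> F x = k1 * q x) -> (forall x, ~ A x -> F x = k2 * q x) ->
  (\int[mu]_x (F x)%:E = (k1 * pr q A + k2 * (1 - pr q A))%:E)%E.
Proof.
move=> hq mA mF F1 F2.
rewrite -(setUv A) integral_setU //; first last.
- by apply/disj_set2P; rewrite setICr.
- by rewrite setUv; apply/measurable_EFinP.
- exact: measurableC.
rewrite (eq_integral (fun x => (k1 * q x)%:E)); last by move=> x; rewrite inE => /F1 ->.
rewrite [X in (_ + X)%E](eq_integral (fun x => (k2 * q x)%:E)); last first.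
  by move=> x; rewrite inE => /F2 ->.
rewrite !intZ //; last exact: measurableC.
by rewrite prC // -EFinD.
Qed.

Definition mkp (q : T -> R) (A : set T) (c1 c2 : R) : T -> R := fun x => q x * (c2 + (c1 - c2) * \1_A x).

Lemma mkpA q A c1 c2 x : A x -> mkp q A c1 c2 x = c1 * q x.
Proof. by move=> Ax; rewrite /mkp indicE mem_set // mulr1 addrC subrK mulrC. Qed.

Lemma mkpnA q A c1 c2 x : ~ A x -> mkp q A c1 c2 x = c2 * q x.
Proof. by move=> Ax; rewrite /mkp indicE memNset // mulr0 addr0 mulrC. Qed.

Lemma mkp_meas q A c1 c2 : is_density mu q -> measurable A ->
  measurable_fun setT (mkp q A c1 c2).
Proof.
move=> hq mA; apply: measurable_funM; first exact: dens_meas.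
apply: measurable_funD => //; apply: measurable_funM => //.
Qed.

Lemma upper q A v : is_density mu q -> measurable A -> 0 < v -> v < 2 ->
  (0 < Pr mu q A)%E -> (Pr mu q A <= (1 - v / 2)%:E)%E ->
  (Dstar mu v q <= KL2 (fine (Pr mu q A) + v / 2) (fine (Pr mu q A)))%E.
Proof.
move=> hq mA v0 v2 aP aQ.
rewrite -/(pr q A) in aP aQ *; rewrite PrE // lte_fin in aP.
rewrite PrE // lee_fin in aQ.
set a := pr q A in aP aQ *; set w := v / 2.
have w0 : 0 < w by rewrite divr_gt0.
have a1 : a < 1 by rewrite /w in aQ; lra.
set c1 := (a + w) / a; set c2 := (1 - (a + w)) / (1 - a).
have c1a : c1 * a = a + w by rewrite /c1; field; rewrite gt_eqF.
have c2a : c2 * (1 - a) = 1 - (a + w) by rewrite /c2; field; rewrite subr_eq0 gt_eqF.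
have c1g : 1 <= c1 by rewrite /c1 ler_pdivlMr // mul1r; lra.
have c2g : 0 <= c2 by rewrite /c2 divr_ge0 //; rewrite /w in aQ *; lra.
have c2l : c2 <= 1 by rewrite /c2 ler_pdivrMr ?subr_gt0 // mul1r; lra.
set p := mkp q A c1 c2.
have mp : measurable_fun setT p by exact: mkp_meas.
have p0 : forall x, 0 <= p x.
  move=> x; have [Ax|Ax] := pselect (A x).
    by rewrite /p mkpA // mulr_ge0 // ?dens_ge0 //; lra.
  by rewrite /p mkpnA // mulr_ge0 // dens_ge0.
have hp : is_density mu p.
  split => //; rewrite (int_pw (k1 := c1) (k2 := c2) hq mA mp).
  - by rewrite -/a c1a c2a; congr EFin; lra.
  - by move=> x Ax; rewrite /p mkpA.
  - by move=> x Ax; rewrite /p mkpnA.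
have hac : abs_cont mu p q.
  move=> B mB qB; apply/le_anti; rewrite Pr_ge0 // andbT.
  apply: (le_trans (y := (\int[mu]_(x in B) ((c1 + c2) * q x)%:E)%E)).
    have mf1 : measurable_fun B (EFin \o p).
      by apply/measurable_EFinP; apply: measurable_funS mp.
    have mf2 : measurable_fun B (EFin \o (fun x => (c1 + c2) * q x)).
      apply/measurable_EFinP; apply: measurable_funS (measurable_funM _ (dens_meas hq)) => //.
    have f10 : forall x, B x -> (0 <= (p x)%:E)%E by move=> x _; rewrite lee_fin.
    apply: ge0_le_integral => //.
    move=> x _; rewrite lee_fin; have q0 := dens_ge0 x hq.
    have [Ax|Ax] := pselect (A x).
      by rewrite /p mkpA // ler_wpM2r // lerDl.
    by rewrite /p mkpnA // ler_wpM2r // lerDr; lra.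
  by rewrite intZ // /pr qB /= mulr0.
have hTV : (v%:E <= TV mu p q)%E.
  rewrite /TV (int_pw (k1 := c1 - 1) (k2 := 1 - c2) hq mA).
  - rewrite lee_fin -/a; have -> : (c1 - 1) * a = w by lra.
    have -> : (1 - c2) * (1 - a) = w by lra.
    by rewrite /w; lra.
  - have mB : measurable_fun setT (fun x => p x - q x) by apply: measurable_funB => //; exact: dens_meas.
    by apply: (measurableT_comp _ mB); exact: normr_measurable.
  - move=> x Ax; rewrite /p mkpA // -{2}(mul1r (q x)) -mulrBl normrM.
    by rewrite (ger0_norm (dens_ge0 x hq)) ger0_norm // subr_ge0.
  - move=> x Ax; rewrite /p mkpnA // -{2}(mul1r (q x)) -mulrBl normrM.
    have h : c2 - 1 <= 0 by rewrite subr_le0.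
    by rewrite (ger0_norm (dens_ge0 x hq)) (ler0_norm h) opprB.
apply: (le_trans (y := KLdiv mu p q)).
  by apply: ereal_inf_lbound; exists p.
rewrite /KLdiv asboolT // integral_mkcond.
rewrite (eq_integral (fun x => (p x * ln (p x / q x))%:E)); last first.
  move=> x _; rewrite patchE; case: ifPn => // /negP xP.
  have -> : p x = 0.
    apply/le_anti; rewrite p0 andbT leNgt; apply/negP => px; apply: xP.
    by rewrite inE.
  by rewrite mul0r.
rewrite (int_pw (k1 := c1 * ln c1) (k2 := c2 * ln c2) hq mA (proj1 (measurable_EFinP _ _) (mKL hp hq))); last 2 first.
- move=> x Ax; rewrite /p mkpA //; have [->|qx] := eqVneq (q x) 0.
    by rewrite !mulr0 mul0r.
  by rewrite mulfK // mulrAC.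
- move=> x Ax; rewrite /p mkpnA //; have [->|qx] := eqVneq (q x) 0.
    by rewrite !mulr0 mul0r.
  by rewrite mulfK // mulrAC.
rewrite -/a /KL2 /xlogxy.
have -> : (a + w == 0) = false by apply/negbTE; rewrite gt_eqF // addr_gt0.
have -> : (a == 0) = false by rewrite gt_eqF.
have -> : (1 - a == 0) = false by rewrite subr_eq0 gt_eqF.
have [e0|e0] := eqVneq (1 - (a + w)) 0.
  have -> : c2 = 0 by rewrite /c2 e0 mul0r.
  by rewrite mul0r mul0r addr0 adde0 -/c1 mulrAC c1a.
rewrite -EFinD -/c1 -/c2 mulrAC c1a mulrAC c2a.
by [].
Qed.

Lemma TV_eq p q : is_density mu p -> is_density mu q ->
  TV mu p q = (2 * (pr p [set x | q x < p x] - pr q [set x | q x < p x]))%:E.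
Proof.
move=> hp hq; set A := [set x | q x < p x].
have mA : measurable A by apply: meas_lt; exact: dens_meas.
have mB : measurable_fun setT (fun x => p x - q x).
  by apply: measurable_funB; exact: dens_meas.
rewrite /TV -(setUv A) integral_setU //; first last.
- by apply/disj_set2P; rewrite setICr.
- rewrite setUv; apply/measurable_EFinP.
  by apply: (measurableT_comp _ mB); exact: normr_measurable.
- exact: measurableC.
rewrite (eq_integral (fun x => (1 * p x - 1 * q x)%:E)); last first.
  move=> x; rewrite inE /A /= => h; rewrite !mul1r ger0_norm //.
  by rewrite subr_ge0 ltW.
rewrite [X in (_ + X)%E](eq_integral (fun x => (1 * q x - 1 * p x)%:E)); last first.
  move=> x; rewrite inE /A /= => /negP; rewrite -leNgt => h.
  by rewrite !mul1r ler0_norm ?opprB // subr_le0.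
rewrite !intlin //; last exact: measurableC.
rewrite -EFinD !prC //; congr EFin; lra.
Qed.

Lemma lower p q v : is_density mu p -> is_density mu q -> 0 < v -> v < 2 ->
  (v%:E <= TV mu p q)%E ->
  (ereal_inf [set KL2 (fine (Pr mu q A) + v / 2) (fine (Pr mu q A)) |
             A in [set A | measurable A /\ (0 < Pr mu q A)%E /\
                           (Pr mu q A <= (1 - v / 2)%:E)%E]] <= KLdiv mu p q)%E.
Proof.
move=> hp hq v0 v2 hTV.
have [hac|hac] := pselect (abs_cont mu p q); last by rewrite /KLdiv asboolF // leey.
set A := [set x | q x < p x].
have mA : measurable A by apply: meas_lt; exact: dens_meas.
rewrite TV_eq // lee_fin -/A in hTV.
set a := pr q A in hTV *; set b := pr p A in hTV *.
have b1 : b <= 1 by exact: pr_le1.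
have a0 : 0 <= a by exact: pr_ge0.
have b0 : 0 <= b by exact: pr_ge0.
have aP : 0 < a.
  rewrite lt_def a0 andbT; apply/negP => /eqP a0'.
  have : Pr mu p A = 0%E by apply: hac => //; rewrite PrE // -/a a0'.
  rewrite PrE // -/b => -[] b0'; move: hTV; rewrite b0' a0'; lra.
set w := v / 2.
have hb : a + w <= b by rewrite /w; lra.
apply: (le_trans (y := KL2 (a + w) a)).
  apply: ereal_inf_lbound; exists A => //; split => //; split.
  - by rewrite PrE // lte_fin.
  - by rewrite PrE // lee_fin -/a /w; rewrite /w in hb; lra.
rewrite /KLdiv asboolT //.
set P := [set x | 0 < p x].
have mP : measurable P by apply: meas_gt; exact: dens_meas.
have AP : A `<=` P.
  move=> x; rewrite /A /P /= => h; apply: le_lt_trans h; exact: dens_ge0.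
have eP : P = A `|` (P `&` ~` A).
  by rewrite -{1}(setIT P) -(setUv A) setIUr ((setIidPr P A).2 AP).
have mPA : measurable (P `&` ~` A) by apply: measurableI => //; exact: measurableC.
rewrite [X in (_ <= \int[mu]_(x in X) _)%E]eP integral_setU //; first last.
- by apply/disj_set2P; rewrite setICA setICr setI0.
- by rewrite -eP; apply: measurable_funS (mKL hp hq).
set I1 := (\int[mu]_(x in A) _)%E; set I2 := (\int[mu]_(x in P `&` ~` A) _)%E.
have K1 c : 0 < c -> (((1 + ln c) * b - c * a)%:E <= I1)%E by exact: key_bound.
have K2 c : 0 < c -> (((1 + ln c) * (1 - b) - c * (1 - a))%:E <= I2)%E.
  move=> c0; apply: le_trans (key_bound hp hq hac mPA c0); rewrite lee_fin.
  have -> : pr p (P `&` ~` A) = 1 - b.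
    rewrite setIC -(@pr_pos p p (~` A) hp hp (fun _ _ h => h)) ?prC //.
    exact: measurableC.
  have : pr q (P `&` ~` A) <= 1 - a.
    rewrite -/a -prC // (pr_split hq (measurableC mA) mP) setIC lerDl.
    exact: pr_ge0.
  by move=> h; rewrite lerD2l lerN2 ler_pM2l.
have a1 : a < 1 by rewrite /w in hb; lra.
have [e1|e1] := eqVneq (a + w) 1.
  have b1' : b = 1 by lra.
  rewrite /KL2 e1 subrr /xlogxy eqxx oner_eq0 gt_eqF // adde0.
  apply/lee_addgt0Pr => e e0.
  have c1P : 0 < 1 / a by rewrite divr_gt0.
  have c2P : 0 < e / (1 - a) by rewrite divr_gt0 // subr_gt0.
  apply: le_trans (leeD (leeD (K1 _ c1P) (K2 _ c2P)) (lexx e%:E)).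
  rewrite -!EFinD lee_fin b1' subrr mulr0 add0r.
  have -> : 1 / a * a = 1 by field; rewrite gt_eqF.
  have -> : e / (1 - a) * (1 - a) = e by field; rewrite subr_eq0 gt_eqF.
  lra.
have e1' : 0 < 1 - (a + w) by rewrite lt_def subr_eq0 eq_sym e1 subr_ge0 (le_trans hb b1).
set c1 := (a + w) / a; set c2 := (1 - (a + w)) / (1 - a).
have c1a : c1 * a = a + w by rewrite /c1; field; rewrite gt_eqF.
have c2a : c2 * (1 - a) = 1 - (a + w) by rewrite /c2; field; rewrite subr_eq0 gt_eqF.
have c1P : 0 < c1 by rewrite /c1 divr_gt0 // addr_gt0 // divr_gt0.
have c2P : 0 < c2 by rewrite /c2 divr_gt0 // subr_gt0.
have l1 : 0 <= ln c1 by apply: ln_ge0; rewrite /c1 ler_pdivlMr // mul1r lerDl /w divr_ge0 // ltW.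
have l2 : ln c2 <= 0.
  apply: ln_le0; rewrite /c2 ler_pdivrMr ?subr_gt0 // mul1r lerD2l lerN2 lerDl.
  by rewrite /w divr_ge0 // ltW.
have aw0 : (a + w == 0) = false by rewrite gt_eqF // addr_gt0 // /w divr_gt0.
have a1' : 0 < 1 - a by rewrite subr_gt0.
rewrite /KL2 /xlogxy aw0 (gt_eqF aP) (gt_eqF e1') (gt_eqF a1').
apply: le_trans (leeD (K1 _ c1P) (K2 _ c2P)); rewrite -EFinD lee_fin -/c1 -/c2 c1a c2a.
have h1 : 0 <= b - (a + w) by rewrite subr_ge0.
have h2 : 0 <= ln c1 - ln c2 by rewrite subr_ge0 (le_trans l2 l1).
have := mulr_ge0 h1 h2.
nra.
Qed.
End S.

Theorem mainTheorem11 (d : measure_display) (T : measurableType d) (R : realType)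
  (mu : {measure set T -> \bar R}) (mu_sf : sigma_finite setT mu)
  (q : T -> R) (hq : is_density mu q) (v : R) (hv0 : 0 < v) (hv2 : v < 2) :
  Dstar mu v q =
  ereal_inf [set KL2 (fine (Pr mu q A) + v / 2) (fine (Pr mu q A)) |
             A in [set A | measurable A /\ (0 < Pr mu q A)%E /\
                           (Pr mu q A <= (1 - v / 2)%:E)%E]].
Proof.
apply/le_anti/andP; split.
- apply/ereal_infP => _ [A [mA [aP aQ]] <-]; exact: upper.
- apply/ereal_infP => _ [p [hp hTV] <-]; exact: lower.
Qed.
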